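(* Let $\alpha=[a_1,a_2,\dots]\in(0,1)$ be irrational and suppose there is $C\in\mathbb{R}$ with $|a_n|\le C$ for all $n\in\mathbb{N}$. Then for every nonnegative subadditive function $F:W_\alpha\to\mathbb{R}$ the limit $\lim_{|w|\to\infty,\,w\in W_\alpha}\frac{F(w)}{|w|}$ exists.
   Context: $\alpha=[a_1,a_2,\dots]$ denotes the continued fraction expansion $\alpha=1/(a_1+1/(a_2+\cdots))$. For $\theta\in[0,1)$, $v_{\alpha,\theta}$ is the two-sided infinite word over $\{0,1\}$ with letters $v_{\alpha,\theta}(n)=\chi_{[1-\alpha,1)}(n\alpha+\theta\bmod1)$; $W_\alpha$ is the set of all finite non-empty subwords of the words $v_{\alpha,\theta}$, $\theta\in[0,1)$, and $|w|$ is the length of $w$. A function $F:W_\alpha\to\mathbb{R}$ is subadditive if $F(ab)\le F(a)+F(b)$ for all $a,b\in W_\alpha$ with $ab\in W_\alpha$. The statement $\lim_{|w|\to\infty,\,w\in W_\alpha}G(w)=a$ means: for every $\epsilon>0$ there is $n_\epsilon$ with $|G(w)-a|\le\epsilon$ for all $w\in W_\alpha$ with $|w|\ge n_\epsilon$; the limit exists if this holds for some real $a$. *)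

(* Defs.v *)
From Stdlib Require Import Reals Lra Lia ZArith List.
Open Scope R_scope.

Definition floorZ (x : R) : Z := (up x - 1)%Z.
Definition fracR (x : R) : R := x - IZR (floorZ x).

(* Continued fraction alpha = 1/(a_1 + 1/(a_2 + ...)), via the Gauss map:
   cf_rem alpha 0 = alpha, cf_rem alpha (k+1) = frac(1 / cf_rem alpha k),
   cf_digit alpha k = floor(1 / cf_rem alpha k) = a_{k+1}. *)
Fixpoint cf_rem (alpha : R) (k : nat) : R :=
  match k with
  | O => alpha
  | S k' => fracR (/ cf_rem alpha k')
  end.
Definition cf_digit (alpha : R) (k : nat) : Z := floorZ (/ cf_rem alpha k).

Definition irrational (x : R) : Prop :=
  ~ exists p q : Z, q <> 0%Z /\ x = IZR p / IZR q.

Definition sturm (alpha theta : R) (n : Z) : bool :=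
  if Rle_dec (1 - alpha) (fracR (IZR n * alpha + theta)) then true else false.

Definition in_W (alpha : R) (w : list bool) : Prop :=
  w <> nil /\
  exists theta : R, 0 <= theta < 1 /\
  exists k : Z, forall i : nat, (i < length w)%nat ->
    nth i w false = sturm alpha theta (k + Z.of_nat i)%Z.

(* Main.v *)
Require Import Defs.
From Stdlib Require Import Reals Lra Lia ZArith List Classical.
Open Scope R_scope.


Lemma floorZ_spec x : IZR (floorZ x) <= x < IZR (floorZ x) + 1.
Proof.
  unfold floorZ. destruct (archimed x) as [H1 H2].
  rewrite minus_IZR. lra.
Qed.

Lemma floorZ_unique x (n : Z) : IZR n <= x < IZR n + 1 -> floorZ x = n.
Proof.
  intros [H1 H2]. unfold floorZ.
  assert (up x = (n + 1)%Z).
  { symmetry. apply tech_up; rewrite plus_IZR; lra. }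
  lia.
Qed.

Lemma fracR_spec x : 0 <= fracR x < 1.
Proof. unfold fracR. pose proof (floorZ_spec x). lra. Qed.

Lemma fracR_shift x (z : Z) : fracR (x + IZR z) = fracR x.
Proof.
  unfold fracR. rewrite (floorZ_unique (x + IZR z) (floorZ x + z)).
  - rewrite plus_IZR. ring.
  - pose proof (floorZ_spec x). rewrite plus_IZR. lra.
Qed.

Lemma fracR_eq x : exists z : Z, x = fracR x + IZR z.
Proof. exists (floorZ x). unfold fracR. ring. Qed.


Section CF.
Variable alpha : R.
Hypothesis Halpha : 0 < alpha < 1.
Hypothesis Hirr : irrational alpha.

Lemma irr_neq0 x : irrational x -> x <> 0.
Proof. intros H E. apply H. exists 0%Z, 1%Z. split. lia. rewrite E. simpl. field. Qed.

Lemma rem_rec k : / cf_rem alpha k = IZR (cf_digit alpha k) + cf_rem alpha (S k).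
Proof. simpl. unfold cf_digit, fracR. ring. Qed.

Lemma rem_irr k : irrational (cf_rem alpha k).
Proof.
  induction k as [|k IH]. exact Hirr.
  intros [p [q [Hq E]]].
  pose proof (irr_neq0 _ IH) as Hn.
  pose proof (rem_rec k) as R. rewrite E in R.
  set (a := cf_digit alpha k) in *.
  assert (Hq' : IZR q <> 0) by (apply not_0_IZR; auto).
  assert (Hs : (a * q + p)%Z <> 0%Z).
  { intro H0. assert (IZR a + IZR p / IZR q = 0).
    { apply (Rmult_eq_reg_r (IZR q)); auto. field_simplify; auto.
      rewrite <- mult_IZR, <- plus_IZR, H0. simpl. ring. }
    rewrite H in R. apply (Rinv_neq_0_compat _ Hn). auto. }
  apply IH. exists q, (a * q + p)%Z. split; auto.
  assert (Hs' : IZR (a*q+p) <> 0) by (apply not_0_IZR; auto).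
  rewrite plus_IZR, mult_IZR in *.
  rewrite <- (Rinv_inv (cf_rem alpha k)). rewrite R. field. split; auto.
Qed.

Lemma rem_pos k : 0 < cf_rem alpha k < 1.
Proof.
  destruct k. simpl. auto.
  pose proof (fracR_spec (/ cf_rem alpha k)).
  pose proof (irr_neq0 _ (rem_irr (S k))). simpl in *. lra.
Qed.

Lemma digit_ge1 k : 1 <= IZR (cf_digit alpha k).
Proof.
  pose proof (rem_pos k) as [H1 H2].
  pose proof (floorZ_spec (/ cf_rem alpha k)) as [H3 H4].
  unfold cf_digit.
  assert (1 < / cf_rem alpha k).
  { rewrite <- Rinv_1. apply Rinv_lt_contravar; lra. }
  assert (0 < IZR (floorZ (/ cf_rem alpha k))) by lra.
  assert (0 < floorZ (/ cf_rem alpha k))%Z.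
  { apply lt_IZR. simpl. lra. }
  apply IZR_le. lia.
Qed.

Variable A : R.
Hypothesis HA : forall n, IZR (cf_digit alpha n) <= A.

Lemma A_ge1 : 1 <= A.
Proof. pose proof (digit_ge1 0). pose proof (HA 0). lra. Qed.

Lemma rem_lb k : / (A + 1) <= cf_rem alpha k.
Proof.
  pose proof (rem_pos k). pose proof (rem_pos (S k)). pose proof (rem_rec k).
  pose proof (HA k). pose proof A_ge1.
  assert (/ cf_rem alpha k <= A + 1) by lra.
  rewrite <- (Rinv_inv (cf_rem alpha k)).
  apply Rinv_le_contravar; auto. apply Rinv_0_lt_compat; lra.
Qed.

Lemma rem_ub k : / (A + 2) <= 1 - cf_rem alpha k.
Proof.
  pose proof (rem_pos k). pose proof (rem_lb (S k)). pose proof (rem_rec k).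
  pose proof (digit_ge1 k). pose proof A_ge1.
  set (b := cf_rem alpha k) in *. set (b' := cf_rem alpha (S k)) in *.
  assert (1 + / (A+1) <= / b) by lra.
  assert (Hb : b * (1 + / (A+1)) <= 1).
  { apply (Rmult_le_reg_r (/ b)). apply Rinv_0_lt_compat; lra.
    rewrite Rmult_comm, <- Rmult_assoc, Rinv_l by lra. lra. }
  assert (b <= (A+1)/(A+2)).
  { replace ((A+1)/(A+2)) with (/ (1 + /(A+1))) by (field; lra).
    apply (Rmult_le_reg_r (1 + /(A+1))).
    assert (0 < /(A+1)) by (apply Rinv_0_lt_compat; lra). lra.
    rewrite Rinv_l. lra. assert (0 < /(A+1)) by (apply Rinv_0_lt_compat; lra). lra. }
  replace (/(A+2)) with (1 - (A+1)/(A+2)) by (field; lra). lra.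
Qed.

Definition eta := / (2 * (A + 1) * (A + 2)).

Lemma eta_facts : 0 < eta /\ eta < / (A + 2) /\ eta * (A + 1) * (A + 2) = / 2.
Proof.
  pose proof A_ge1. unfold eta. repeat split.
  - apply Rinv_0_lt_compat. nra.
  - apply Rinv_lt_contravar. nra. nra.
  - field. lra.
Qed.

Lemma ba_main : forall n k (q p : Z), Z.to_nat q = n -> (1 <= q)%Z ->
  Rabs (IZR q * cf_rem alpha k - IZR p) < eta ->
  IZR q * Rabs (IZR q * cf_rem alpha k - IZR p)
   - (A + 2) * (IZR q * cf_rem alpha k - IZR p) ^ 2 >= eta / 2.
Proof.
  intro n. induction n as [n IH] using lt_wf_ind.
  intros k q p Hn Hq He.
  pose proof A_ge1 as HA1. destruct eta_facts as [Het1 [Het2 Het3]].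
  pose proof (rem_pos k) as [Hb0 Hb1]. pose proof (rem_lb k) as Hblb.
  pose proof (rem_ub k) as Hbub. pose proof (rem_rec k) as Hrec.
  set (b := cf_rem alpha k) in *. set (b' := cf_rem alpha (S k)) in *.
  set (a := cf_digit alpha k) in *.
  set (e := IZR q * b - IZR p) in *.
  assert (HqR : 1 <= IZR q) by (apply IZR_le; auto).
  assert (Hinv1 : / (A+2) <= / (A+1)).
  { apply Rinv_le_contravar; lra. }
  assert (Hp1 : (1 <= p)%Z).
  { destruct (Z_lt_le_dec p 1) as [H|H]; auto. exfalso.
    assert (IZR p <= 0) by (apply IZR_le; lia).
    assert (e >= b) by (unfold e; nra).
    rewrite Rabs_right in He by lra. lra. }
  assert (Hpq : (p < q)%Z).
  { destruct (Z_lt_le_dec p q) as [H|H]; auto. exfalso.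
    assert (IZR q <= IZR p) by (apply IZR_le; lia).
    assert (- e >= 1 - b) by (unfold e; nra).
    rewrite Rabs_left1 in He by lra. lra. }
  assert (HpR : 1 <= IZR p) by (apply IZR_le; auto).
  set (E := IZR p * b' - IZR (q - p * a)).
  assert (HeE : e = - b * E).
  { unfold e, E. rewrite minus_IZR, mult_IZR.
    replace b' with (/ b - IZR a) by lra. field. lra. }
  assert (HabsE : Rabs e = b * Rabs E).
  { rewrite HeE, Rabs_mult, Rabs_Ropp, (Rabs_right b) by lra. ring. }
  assert (HPsiE : IZR p * Rabs E - (A + 2) * E ^ 2 >= eta / 2).
  { destruct (Rlt_le_dec (Rabs E) eta) as [Hs|Hs].
    - apply (IH (Z.to_nat p)); auto; lia.
    - assert (HEub : Rabs E <= eta * (A + 1)).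
      { assert (b * Rabs E < eta) by lra.
        assert (/ b <= A + 1).
        { rewrite <- (Rinv_inv (A+1)). apply Rinv_le_contravar; auto.
          apply Rinv_0_lt_compat; lra. }
        assert (HEq : Rabs E = (b * Rabs E) * / b) by (field; lra).
        assert (0 <= Rabs E) by apply Rabs_pos.
        assert (0 < / b) by (apply Rinv_0_lt_compat; lra).
        rewrite HEq. apply Rmult_le_compat; nra. }
      replace (E ^ 2) with (Rabs E * Rabs E) by (rewrite <- Rabs_mult; simpl;
        rewrite Rmult_1_r; apply Rabs_right; nra).
      assert ((A + 2) * Rabs E <= / 2) by nra. nra. }
  assert (Hmu : (A + 2) * (1 - b) >= 1).
  { assert ((A+2) * / (A+2) = 1) by (field; lra). nra. }
  replace (e ^ 2) with (b * b * (Rabs E * Rabs E)).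
  2:{ rewrite HeE. replace ((- b * E) ^ 2) with (b * b * (E * E)) by ring.
      rewrite <- Rabs_mult. rewrite Rabs_right. ring. nra. }
  replace (E ^ 2) with (Rabs E * Rabs E) in HPsiE by (rewrite <- Rabs_mult; simpl;
        rewrite Rmult_1_r; apply Rabs_right; nra).
  assert (Hqb : IZR q * b = IZR p + e) by (unfold e; ring).
  assert (He2 : e >= - (b * Rabs E)) by (rewrite <- HabsE; pose proof (Rle_abs (-e)); rewrite Rabs_Ropp in H; lra).
  rewrite HabsE.
  assert (HX : 0 <= Rabs E) by apply Rabs_pos.
  assert (IZR q * (b * Rabs E) = (IZR p + e) * Rabs E) by (rewrite <- Hqb; ring).
  rewrite H.
  assert ((IZR p + e) * Rabs E >= IZR p * Rabs E - b * Rabs E * Rabs E) by nra.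
  assert ((A+2) * (b * b) + b <= A + 2) by nra.
  nra.
Qed.

Definition c0 := eta / 2.

Lemma c0_facts : 0 < c0 <= 1.
Proof. destruct eta_facts as [H1 [H2 H3]]. pose proof A_ge1. unfold c0.
  assert (/ (A+2) <= 1). { rewrite <- Rinv_1. apply Rinv_le_contravar; lra. } lra. Qed.

Lemma badly_approx_pos (q p : Z) : (1 <= q)%Z ->
  c0 / IZR q <= Rabs (IZR q * alpha - IZR p).
Proof.
  intros Hq. assert (HqR : 1 <= IZR q) by (apply IZR_le; auto).
  destruct eta_facts as [H1 [H2 H3]]. unfold c0.
  apply (Rmult_le_reg_r (IZR q)). lra.
  replace (eta / 2 / IZR q * IZR q) with (eta / 2) by (field; lra).
  destruct (Rlt_le_dec (Rabs (IZR q * alpha - IZR p)) eta) as [Hs|Hs].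
  - pose proof (ba_main _ 0 q p eq_refl Hq Hs) as H. simpl in H.
    assert (0 <= (IZR q * alpha - IZR p) ^ 2) by (apply pow2_ge_0).
    assert (0 <= A + 2) by (pose proof A_ge1; lra). nra.
  - nra.
Qed.

Lemma badly_approx (q p : Z) : (q <> 0)%Z ->
  c0 / Rabs (IZR q) <= Rabs (IZR q * alpha - IZR p).
Proof.
  intros Hq. destruct (Z_lt_le_dec 0 q).
  - rewrite Rabs_right. apply badly_approx_pos. lia.
    apply Rle_ge, IZR_le. lia.
  - rewrite Rabs_left1 by (apply IZR_le; lia).
    rewrite <- opp_IZR.
    replace (Rabs (IZR q * alpha - IZR p)) with (Rabs (IZR (- q) * alpha - IZR (- p))).
    apply badly_approx_pos. lia.
    rewrite !opp_IZR, <- Rabs_Ropp. f_equal. ring.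
Qed.

End CF.



Lemma pigeon : forall N (f : nat -> nat), (forall i, (i <= N)%nat -> (f i < N)%nat) ->
  exists i j, (i < j <= N)%nat /\ f i = f j.
Proof.
  induction N as [|N IH]; intros f Hf.
  - specialize (Hf 0%nat (le_n 0)). lia.
  - destruct (classic (exists i, (i <= N)%nat /\ f i = f (S N))) as [[i [Hi E]]|Hno].
    + exists i, (S N). split. lia. auto.
    + set (g := fun i => if Nat.eqb (f i) N then f (S N) else f i).
      assert (Hg : forall i, (i <= N)%nat -> (g i < N)%nat).
      { intros i Hi. unfold g. destruct (Nat.eqb_spec (f i) N).
        - assert (f (S N) <> N). { intro. apply Hno. exists i. split; auto; lia. }
          specialize (Hf (S N) (le_n _)). lia.
        - specialize (Hf i ltac:(lia)). lia. }
      destruct (IH g Hg) as [i [j [Hij E]]].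
      unfold g in E.
      destruct (Nat.eqb_spec (f i) N); destruct (Nat.eqb_spec (f j) N).
      * exists i, j. split. lia. congruence.
      * exfalso. apply Hno. exists j. split. lia. auto.
      * exfalso. apply Hno. exists i. split. lia. auto.
      * exists i, j. split. lia. auto.
Qed.

Lemma dirichlet (alpha : R) (Q : nat) : (1 <= Q)%nat ->
  exists q p : Z, (1 <= q)%Z /\ (q <= Z.of_nat Q)%Z /\
    Rabs (IZR q * alpha - IZR p) < / INR Q.
Proof.
  intros HQ.
  assert (HQR : 1 <= INR Q) by (apply (le_INR 1); auto).
  set (box := fun i : nat => floorZ (INR Q * fracR (INR i * alpha))).
  assert (Hbox : forall i, (0 <= box i < Z.of_nat Q)%Z).
  { intro i. unfold box. pose proof (fracR_spec (INR i * alpha)).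
    pose proof (floorZ_spec (INR Q * fracR (INR i * alpha))) as [H1 H2].
    split.
    - assert (-1 < floorZ (INR Q * fracR (INR i * alpha)))%Z.
      { apply lt_IZR. assert (0 <= INR Q * fracR (INR i * alpha)) by nra. simpl. lra. }
      lia.
    - apply lt_IZR. rewrite <- INR_IZR_INZ. nra. }
  destruct (pigeon Q (fun i => Z.to_nat (box i))) as [i [j [Hij E]]].
  { intros i _. specialize (Hbox i). lia. }
  assert (E' : box i = box j) by (pose proof (Hbox i); pose proof (Hbox j); lia).
  unfold box in E'.
  pose proof (floorZ_spec (INR Q * fracR (INR i * alpha))) as [H1 H2].
  pose proof (floorZ_spec (INR Q * fracR (INR j * alpha))) as [H3 H4].
  rewrite E' in H1, H2.
  exists (Z.of_nat j - Z.of_nat i)%Z, (floorZ (INR j * alpha) - floorZ (INR i * alpha))%Z.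
  split. lia. split. lia.
  assert (Hd : IZR (Z.of_nat j - Z.of_nat i) * alpha - IZR (floorZ (INR j * alpha) - floorZ (INR i * alpha))
     = fracR (INR j * alpha) - fracR (INR i * alpha)).
  { unfold fracR. rewrite !minus_IZR, <- !INR_IZR_INZ. ring. }
  rewrite Hd.
  apply (Rmult_lt_reg_l (INR Q)). lra.
  rewrite Rinv_r by lra.
  rewrite <- (Rabs_right (INR Q)) by lra. rewrite <- Rabs_mult.
  apply Rabs_def1; lra.
Qed.


Lemma INR_Z2N (z : Z) : (0 <= z)%Z -> INR (Z.to_nat z) = IZR z.
Proof. intro H. rewrite INR_IZR_INZ, Z2Nat.id; auto. Qed.

Section Dens.
Variable alpha : R.
Variable c : R.
Hypothesis Hc : 0 < c.
Hypothesis Hba : forall q p : Z, (1 <= q)%Z -> c / IZR q <= Rabs (IZR q * alpha - IZR p).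

Definition Kd := 4 * (4 / c + 1).

Lemma jq_bound (k : nat) (q : Z) (s j : R) :
  (1 <= q)%Z -> IZR q <= 4 * 2 ^ k -> c / IZR q <= Rabs s ->
  0 <= j <= / 2 ^ k / Rabs s + 1 -> j * IZR q <= Kd * 2 ^ k.
Proof.
  intros Hq HqQ Hs [Hj1 Hj2].
  assert (HqR : 1 <= IZR q) by (apply IZR_le; auto).
  assert (HP : 0 < 2 ^ k) by (apply pow_lt; lra).
  set (P := 2 ^ k) in *.
  assert (Hcq : 0 < c / IZR q) by (apply Rdiv_lt_0_compat; lra).
  assert (Hsp : 0 < Rabs s) by lra.
  assert (H1 : / Rabs s <= IZR q / c).
  { replace (IZR q / c) with (/ (c / IZR q)) by (field; lra).
    apply Rinv_le_contravar; lra. }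
  assert (H2 : j <= / P * (IZR q / c) + 1).
  { unfold Rdiv in Hj2. assert (0 < / P) by (apply Rinv_0_lt_compat; lra). nra. }
  assert (H3 : j * IZR q <= (/ P * (IZR q / c) + 1) * IZR q) by nra.
  assert (H4 : (/ P * (IZR q / c) + 1) * IZR q <= (/ P * (4 * P / c) + 1) * (4 * P)).
  { assert (0 < / P) by (apply Rinv_0_lt_compat; lra).
    assert (0 < / c) by (apply Rinv_0_lt_compat; lra).
    assert (IZR q * / c <= 4 * P * / c) by (apply Rmult_le_compat_r; lra).
    assert (/ P * (IZR q * / c) <= / P * (4 * P * / c)) by (apply Rmult_le_compat_l; lra).
    assert (0 <= / P * (IZR q * / c)) by (apply Rmult_le_pos; [lra|apply Rmult_le_pos; lra]).
    unfold Rdiv. apply Rmult_le_compat; lra. }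
  unfold Kd. replace ((/ P * (4 * P / c) + 1) * (4 * P)) with (4 * (4 / c + 1) * P) in H4
    by (field; lra). lra.
Qed.

Lemma dens_pow : forall k a y, exists m : nat, INR m <= Kd * 2 ^ k /\
  exists z : Z, a <= y + INR m * alpha + IZR z < a + / 2 ^ k.
Proof.
  assert (HK : 0 < Kd) by (unfold Kd; assert (0 < 4 / c) by (apply Rdiv_lt_0_compat; lra); lra).
  induction k as [|k IH]; intros a y.
  - exists 0%nat. split. simpl. lra.
    exists (- floorZ (y - a))%Z. rewrite opp_IZR. simpl.
    pose proof (floorZ_spec (y - a)). lra.
  - assert (HP : 0 < 2 ^ k) by (apply pow_lt; lra).
    destruct (dirichlet alpha (2 ^ (k + 2))) as [q [p [Hq1 [HqQ Hs]]]].
    { pose proof (Nat.pow_le_mono_r 2 0 (k+2) ltac:(lia) ltac:(lia)). simpl in H. lia. }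
    assert (HQ : INR (2 ^ (k + 2)) = 4 * 2 ^ k).
    { rewrite pow_INR, pow_add. replace (INR 2) with 2 by (simpl; lra). ring. }
    rewrite HQ in Hs.
    assert (HqQ' : IZR q <= 4 * 2 ^ k).
    { rewrite <- HQ, INR_IZR_INZ. apply IZR_le. auto. }
    pose proof (Hba q p Hq1) as Hb.
    assert (HqR : 1 <= IZR q) by (apply IZR_le; auto).
    assert (Hcq : 0 < c / IZR q) by (apply Rdiv_lt_0_compat; lra).
    set (s := IZR q * alpha - IZR p) in *.
    pose proof Hb as Hb0.
    assert (Hs2 : Rabs s < / 2 ^ (S k)).
    { simpl. rewrite Rinv_mult. replace (/ (4 * 2 ^ k)) with (/2 * / 2 * / 2 ^ k) in Hs
        by (field; lra). assert (0 < / 2 ^ k) by (apply Rinv_0_lt_compat; lra). lra. }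
    assert (HPs : 0 < / 2 ^ k) by (apply Rinv_0_lt_compat; lra).
    destruct (Rlt_le_dec 0 s) as [Hpos|Hneg].
    + destruct (IH (a - / 2 ^ k) y) as [m' [Hm' [z' Hz']]].
      set (t := a - (y + INR m' * alpha + IZR z')).
      rewrite Rabs_right in Hb, Hs2 by lra.
      destruct (archimed (t / s)) as [Hu1 Hu2].
      set (j := up (t / s)) in *.
      assert (Ht : 0 < t <= / 2 ^ k) by (unfold t; lra).
      assert (Hts : 0 < t / s) by (apply Rdiv_lt_0_compat; lra).
      assert (Hj : (1 <= j)%Z) by (assert (0 < j)%Z by (apply lt_IZR; simpl; lra); lia).
      assert (HjR : 1 <= IZR j) by (apply IZR_le; auto).
      exists (m' + Z.to_nat j * Z.to_nat q)%nat. split.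
      * rewrite plus_INR, mult_INR, !INR_Z2N by lia.
        assert (IZR j * IZR q <= Kd * 2 ^ k).
        { apply (jq_bound k q s); auto. rewrite Rabs_right by lra. split. lra.
          assert (t / s <= / 2 ^ k / s).
          { unfold Rdiv. apply Rmult_le_compat_r. left; apply Rinv_0_lt_compat; lra. lra. }
          lra. }
        simpl. lra.
      * exists (z' - j * p)%Z.
        rewrite plus_INR, mult_INR, !INR_Z2N by lia. rewrite minus_IZR, mult_IZR.
        assert (Hjs1 : t < IZR j * s).
        { apply (Rmult_lt_reg_r (/ s)). apply Rinv_0_lt_compat; lra.
          rewrite Rmult_assoc, Rinv_r by lra. lra. }
        assert (Hjs2 : IZR j * s <= t + s).
        { assert (IZR j <= t / s + 1) by lra.
          apply (Rmult_le_compat_r s) in H; [|lra].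
          replace ((t / s + 1) * s) with (t + s) in H by (field; lra). lra. }
        replace (y + (INR m' + IZR j * IZR q) * alpha + (IZR z' - IZR j * IZR p))
          with (a - t + IZR j * s) by (unfold t, s; ring).
        split. lra.
        assert (/ 2 ^ S k = / 2 * / 2 ^ k) by (simpl; rewrite Rinv_mult; auto).
        lra.
    + assert (Hs0 : s <> 0).
      { intro E. rewrite E, Rabs_R0 in Hb. lra. }
      assert (Hneg' : s < 0) by lra.
      destruct (IH a y) as [m' [Hm' [z' Hz']]].
      set (t := y + INR m' * alpha + IZR z' - a).
      rewrite Rabs_left in Hb, Hs2 by lra.
      set (d := - s) in *.
      destruct (archimed (t / d)) as [Hu1 Hu2].
      set (j := (up (t / d) - 1)%Z) in *.
      assert (Ht : 0 <= t < / 2 ^ k) by (unfold t; lra).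
      assert (Hts : 0 <= t / d) by (apply Rmult_le_pos; [lra| left; apply Rinv_0_lt_compat; lra]).
      assert (HjR1 : IZR j <= t / d) by (unfold j; rewrite minus_IZR; simpl; lra).
      assert (HjR2 : t / d < IZR j + 1) by (unfold j; rewrite minus_IZR; simpl; lra).
      assert (Hj : (0 <= j)%Z) by (assert (-1 < j)%Z by (apply lt_IZR; simpl; lra); lia).
      assert (HjR : 0 <= IZR j) by (apply IZR_le; auto).
      exists (m' + Z.to_nat j * Z.to_nat q)%nat. split.
      * rewrite plus_INR, mult_INR, !INR_Z2N by lia.
        assert (IZR j * IZR q <= Kd * 2 ^ k).
        { apply (jq_bound k q s); auto. rewrite Rabs_left by lra. split. lra.
          fold d. assert (t / d <= / 2 ^ k / d).
          { unfold Rdiv. apply Rmult_le_compat_r. left; apply Rinv_0_lt_compat; lra. lra. }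
          lra. }
        simpl. lra.
      * exists (z' - j * p)%Z.
        rewrite plus_INR, mult_INR, !INR_Z2N by lia. rewrite minus_IZR, mult_IZR.
        assert (Hjs1 : IZR j * d <= t).
        { apply (Rmult_le_compat_r d) in HjR1; [|lra].
          replace (t / d * d) with t in HjR1 by (field; lra). lra. }
        assert (Hjs2 : t < IZR j * d + d).
        { apply (Rmult_lt_compat_r d) in HjR2; [|lra].
          replace (t / d * d) with t in HjR2 by (field; lra). lra. }
        replace (y + (INR m' + IZR j * IZR q) * alpha + (IZR z' - IZR j * IZR p))
          with (a + t - IZR j * d) by (unfold t, d, s; ring).
        split. lra.
        assert (/ 2 ^ S k = / 2 * / 2 ^ k) by (simpl; rewrite Rinv_mult; auto).
        lra.
Qed.

Lemma log2_aux : forall N rho, 0 < rho <= 1 -> / rho <= INR N ->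
  exists k, / 2 ^ k <= rho /\ 2 ^ k <= 2 / rho.
Proof.
  induction N as [|N IH]; intros rho Hr HN.
  - simpl in HN. assert (0 < / rho) by (apply Rinv_0_lt_compat; lra). lra.
  - destruct (Rlt_le_dec (/2) rho).
    + exists 1%nat. simpl. split. lra.
      assert (1 <= / rho). { rewrite <- Rinv_1. apply Rinv_le_contravar; lra. }
      unfold Rdiv. lra.
    + destruct (IH (2 * rho)) as [k [H1 H2]]. lra.
      * rewrite S_INR in HN. rewrite Rinv_mult.
        assert (2 <= / rho). { replace 2 with (/ / 2) by (field). apply Rinv_le_contravar; lra. }
        lra.
      * exists (S k). simpl. split.
        -- rewrite Rinv_mult. lra.
        -- replace (2 / (2 * rho)) with (/ rho) in H2 by (field; lra). unfold Rdiv. lra.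
Qed.

Lemma log2_exists rho : 0 < rho <= 1 -> exists k, / 2 ^ k <= rho /\ 2 ^ k <= 2 / rho.
Proof.
  intros Hr. destruct (archimed (/ rho)) as [H1 H2].
  assert (0 < / rho) by (apply Rinv_0_lt_compat; lra).
  apply (log2_aux (Z.to_nat (up (/ rho)))); auto.
  rewrite INR_Z2N. lra. apply le_IZR. simpl. lra.
Qed.

Lemma density rho a y : 0 < rho <= 1 -> exists m : nat, INR m <= 2 * Kd / rho /\
  exists z : Z, a <= y + INR m * alpha + IZR z < a + rho.
Proof.
  intros Hr. destruct (log2_exists rho Hr) as [k [H1 H2]].
  destruct (dens_pow k a y) as [m [Hm [z Hz]]].
  exists m. split.
  - assert (0 < Kd) by (unfold Kd; assert (0 < 4 / c) by (apply Rdiv_lt_0_compat; lra); lra).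
    replace (2 * Kd / rho) with (Kd * (2 / rho)) by (field; lra).
    assert (Kd * 2 ^ k <= Kd * (2 / rho)) by (apply Rmult_le_compat_l; lra). lra.
  - exists z. lra.
Qed.
End Dens.


Section Cyl.
Variable alpha : R.
Hypothesis Halpha : 0 < alpha < 1.
Variable c : R.
Hypothesis Hc : 0 < c <= 1.
Hypothesis Hba : forall q p : Z, (q <> 0)%Z -> c / Rabs (IZR q) <= Rabs (IZR q * alpha - IZR p).

Definition letter (i : nat) (x : R) : bool :=
  if Rle_dec (1 - alpha) (fracR (x + INR i * alpha)) then true else false.

Lemma sturm_letter theta k i :
  sturm alpha theta (k + Z.of_nat i) = letter i (IZR k * alpha + theta).
Proof.
  unfold sturm, letter. rewrite plus_IZR, <- INR_IZR_INZ.
  replace ((IZR k + INR i) * alpha + theta) with (IZR k * alpha + theta + INR i * alpha) by ring.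
  reflexivity.
Qed.

Lemma letter_per i x (z : Z) : letter i (x + IZR z) = letter i x.
Proof.
  unfold letter. replace (x + IZR z + INR i * alpha) with (x + INR i * alpha + IZR z) by ring.
  rewrite fracR_shift. reflexivity.
Qed.

Lemma letter_shift j i x : letter (j + i) x = letter i (x + INR j * alpha).
Proof.
  unfold letter. rewrite plus_INR.
  replace (x + (INR j + INR i) * alpha) with (x + INR j * alpha + INR i * alpha) by ring.
  reflexivity.
Qed.

Definition cut (i : nat) (z : R) : Prop :=
  exists w : Z, z + INR i * alpha = IZR w \/ z + INR (S i) * alpha = IZR w.

Lemma letter_const i x x' : x <= x' -> (forall z, x < z <= x' -> ~ cut i z) ->
  letter i x = letter i x'.
Proof.
  intros Hxx Hno.
  set (s := x + INR i * alpha). set (s' := x' + INR i * alpha).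
  pose proof (floorZ_spec s) as [F1 F2].
  set (fl := floorZ s) in *.
  assert (Hfl : floorZ s' = fl).
  { apply floorZ_unique. split. unfold s, s' in *. lra.
    destruct (Rlt_le_dec s' (IZR fl + 1)) as [H|H]; auto. exfalso.
    apply (Hno (IZR (fl + 1) - INR i * alpha)).
    - rewrite plus_IZR. unfold s, s' in *. simpl. lra.
    - exists (fl + 1)%Z. left. ring. }
  unfold letter. fold s s'.
  unfold fracR. rewrite Hfl. fold fl.
  destruct (Rle_dec (1 - alpha) (s - IZR fl)); destruct (Rle_dec (1 - alpha) (s' - IZR fl)); auto.
  - exfalso. unfold s, s' in *. lra.
  - exfalso. apply (Hno (x + (1 - alpha - (s - IZR fl)))).
    + unfold s, s' in *. lra.
    + exists (fl + 1)%Z. right. rewrite S_INR, plus_IZR. unfold s. simpl. ring.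
Qed.

Lemma cut_sep n i1 i2 z1 z2 : (1 <= n)%nat -> (i1 < n)%nat -> (i2 < n)%nat ->
  cut i1 z1 -> cut i2 z2 -> z1 <> z2 -> c / INR n <= Rabs (z1 - z2).
Proof.
  intros Hn H1 H2 [w1 C1] [w2 C2] Hne.
  assert (HnR : 1 <= INR n) by (apply (le_INR 1); auto).
  assert (Hgen : forall j1 j2 : nat, (j1 <= n)%nat -> (j2 <= n)%nat ->
     z1 + INR j1 * alpha = IZR w1 -> z2 + INR j2 * alpha = IZR w2 -> c / INR n <= Rabs (z1 - z2)).
  { intros j1 j2 Hj1 Hj2 E1 E2.
    destruct (Nat.eq_dec j1 j2) as [Ej|Ej].
    - subst j2. assert (Hw : z1 - z2 = IZR (w1 - w2)) by (rewrite minus_IZR; lra).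
      rewrite Hw. assert (w1 - w2 <> 0)%Z.
      { intro E. rewrite E in Hw. simpl in Hw. lra. }
      assert (1 <= Rabs (IZR (w1 - w2))).
      { rewrite <- abs_IZR. apply IZR_le. lia. }
      assert (c / INR n <= 1).
      { apply (Rmult_le_reg_r (INR n)). lra. unfold Rdiv. rewrite Rmult_assoc, Rinv_l by lra. lra. }
      lra.
    - set (q := (Z.of_nat j1 - Z.of_nat j2)%Z).
      assert (Hq : (q <> 0)%Z) by (unfold q; lia).
      pose proof (Hba q (w1 - w2) Hq) as Hb.
      replace (IZR q * alpha - IZR (w1 - w2)) with (- (z1 - z2)) in Hb
        by (unfold q; rewrite !minus_IZR, <- !INR_IZR_INZ; lra).
      rewrite Rabs_Ropp in Hb.
      assert (Hq1 : 1 <= Rabs (IZR q)) by (rewrite <- abs_IZR; apply IZR_le; lia).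
      assert (Hqn : Rabs (IZR q) <= INR n).
      { rewrite <- abs_IZR, INR_IZR_INZ. apply IZR_le. unfold q. lia. }
      assert (c / INR n <= c / Rabs (IZR q)).
      { unfold Rdiv. apply Rmult_le_compat_l. lra. apply Rinv_le_contravar; lra. }
      lra. }
  destruct C1 as [C1|C1]; destruct C2 as [C2|C2];
    [apply (Hgen i1 i2)|apply (Hgen i1 (S i2))|apply (Hgen (S i1) i2)|apply (Hgen (S i1) (S i2))];
    auto; lia.
Qed.

Lemma cylinder n x0 : (1 <= n)%nat -> exists a, forall x, a <= x < a + c / (4 * INR n) ->
  forall i, (i < n)%nat -> letter i x = letter i x0.
Proof.
  intros Hn. assert (HnR : 1 <= INR n) by (apply (le_INR 1); auto).
  set (rho := c / (4 * INR n)).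
  assert (Hrho : 0 < rho) by (unfold rho; apply Rdiv_lt_0_compat; lra).
  assert (Hrho3 : 3 * rho < c / INR n).
  { unfold rho. replace (c / (4 * INR n)) with ((c / INR n) / 4) by (field; lra).
    assert (0 < c / INR n) by (apply Rdiv_lt_0_compat; lra). lra. }
  destruct (classic (exists z i, (i < n)%nat /\ x0 < z < x0 + 2 * rho /\ cut i z)) as
    [[z1 [i1 [Hi1 [Hz1 Cz1]]]]|Hno].
  - exists (x0 - rho). intros x Hx i Hi.
    apply letter_const. lra.
    intros z Hz Cz.
    assert (z <> z1) by lra.
    pose proof (cut_sep n i i1 z z1 Hn Hi Hi1 Cz Cz1 H).
    rewrite Rabs_left in H0 by lra. lra.
  - exists x0. intros x Hx i Hi. symmetry.
    apply letter_const. lra.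
    intros z Hz Cz. apply Hno. exists z, i. split; auto. split; auto. lra.
Qed.

Lemma Hba_pos : forall q p : Z, (1 <= q)%Z -> c / IZR q <= Rabs (IZR q * alpha - IZR p).
Proof.
  intros q p Hq. pose proof (Hba q p ltac:(lia)).
  rewrite Rabs_right in H. auto. apply Rle_ge, IZR_le. lia.
Qed.

Lemma recurrence : exists Cr : nat, (1 <= Cr)%nat /\ forall u v, in_W alpha u -> in_W alpha v ->
  (length v >= Cr * length u)%nat ->
  exists g v', v = g ++ u ++ v' /\ (length g <= Cr * length u)%nat.
Proof.
  set (K := Kd c).
  assert (HK : 0 < K) by (unfold K, Kd; assert (0 < 4 / c) by (apply Rdiv_lt_0_compat; lra); lra).
  destruct (archimed (8 * K / c + 1)) as [Hu1 Hu2].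
  assert (H8 : 0 < 8 * K / c) by (apply Rdiv_lt_0_compat; lra).
  exists (Z.to_nat (up (8 * K / c + 1))).
  assert (HCr : 8 * K / c + 1 <= INR (Z.to_nat (up (8 * K / c + 1)))).
  { rewrite INR_Z2N. lra. apply le_IZR. simpl. lra. }
  set (Cr := Z.to_nat (up (8 * K / c + 1))) in *.
  split. { apply INR_le. simpl. lra. }
  intros u v [Hu0 [th [Hth [k Hk]]]] [Hv0 [th' [Hth' [k' Hk']]]] Hlen.
  set (n := length u) in *.
  assert (Hn : (1 <= n)%nat) by (destruct u; [congruence|simpl in n; unfold n; simpl; lia]).
  assert (HnR : 1 <= INR n) by (apply (le_INR 1); auto).
  set (x0 := IZR k * alpha + th). set (y0 := IZR k' * alpha + th').
  destruct (cylinder n x0 Hn) as [a Ha].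
  set (rho := c / (4 * INR n)) in *.
  assert (Hrho : 0 < rho <= 1).
  { unfold rho. split. apply Rdiv_lt_0_compat; lra.
    apply (Rmult_le_reg_r (4 * INR n)). lra. unfold Rdiv. rewrite Rmult_assoc, Rinv_l by lra. lra. }
  destruct (density alpha c (proj1 Hc) Hba_pos rho a y0 Hrho) as [m [Hm [z Hz]]].
  fold K in Hm.
  assert (Hm2 : INR m <= 8 * K / c * INR n).
  { replace (8 * K / c * INR n) with (2 * K / rho) by (unfold rho; field; lra). auto. }
  assert (Hmn : (m + n <= Cr * n)%nat).
  { apply INR_le. rewrite plus_INR, mult_INR.
    assert ((8 * K / c + 1) * INR n <= INR Cr * INR n) by (apply Rmult_le_compat_r; lra).
    lra. }
  assert (Hmv : (m + n <= length v)%nat) by lia.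
  assert (Hocc : forall i, (i < n)%nat -> nth (m + i) v false = nth i u false).
  { intros i Hi. rewrite Hk by auto. rewrite Hk' by lia. rewrite !sturm_letter.
    fold x0 y0. rewrite letter_shift, <- (letter_per i _ z).
    apply Ha; auto. }
  exists (firstn m v), (skipn n (skipn m v)). split.
  - rewrite <- (firstn_skipn m v) at 1. f_equal.
    rewrite <- (firstn_skipn n (skipn m v)) at 1. f_equal.
    apply nth_ext with (d := false) (d' := false).
    + rewrite length_firstn, length_skipn. unfold n. lia.
    + intros i Hi. rewrite length_firstn, length_skipn in Hi.
      rewrite nth_firstn. destruct (Nat.ltb_spec i n); [|lia].
      rewrite nth_skipn. apply Hocc. lia.
  - rewrite length_firstn. lia.
Qed.
End Cyl.


Lemma Rdiv_le_0_compat a b : 0 <= a -> 0 < b -> 0 <= a / b.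
Proof. intros. unfold Rdiv. apply Rmult_le_pos; auto. left; apply Rinv_0_lt_compat; auto. Qed.

Section Sub.
Variable W : list bool -> Prop.
Hypothesis Wfac : forall x y z, W (x ++ y ++ z) -> y <> nil -> W y.
Hypothesis Wlen : forall n, (1 <= n)%nat -> exists w, W w /\ length w = n.
Variable F : list bool -> R.
Hypothesis Fnonneg : forall w, W w -> 0 <= F w.
Hypothesis Fsub : forall a b, W a -> W b -> W (a ++ b) -> F (a ++ b) <= F a + F b.
Variable Cr : nat.
Hypothesis HCr : (1 <= Cr)%nat.
Hypothesis Hrec : forall u v, W u -> W v -> (length v >= Cr * length u)%nat ->
  exists g v', v = g ++ u ++ v' /\ (length g <= Cr * length u)%nat.

Definition WW v := v = nil \/ W v.
Definition G v := match v with nil => 0 | _ => F v end.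

Lemma WW_fac x y z : WW (x ++ y ++ z) -> WW y.
Proof.
  intros [H|H].
  - left. destruct x; destruct y; simpl in *; congruence.
  - destruct y. left; auto. right. apply (Wfac x _ z); auto. congruence.
Qed.

Lemma WW_pre a b : WW (a ++ b) -> WW a.
Proof. intro H. apply (WW_fac nil a b). auto. Qed.
Lemma WW_suf a b : WW (a ++ b) -> WW b.
Proof. intro H. apply (WW_fac a b nil). rewrite app_nil_r. auto. Qed.

Lemma G_sub a b : WW (a ++ b) -> G (a ++ b) <= G a + G b.
Proof.
  intros H. destruct a as [|x a]. simpl. lra.
  destruct b as [|y b]. rewrite app_nil_r. simpl. lra.
  assert (Ha : W (x :: a)). { destruct (WW_pre _ _ H) as [E|E]; [discriminate|auto]. }
  assert (Hb : W (y :: b)). { destruct (WW_suf _ _ H) as [E|E]; [discriminate|auto]. }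
  assert (Hab : W ((x :: a) ++ y :: b)). { destruct H as [E|E]; [discriminate|auto]. }
  change (G ((x :: a) ++ y :: b)) with (F ((x :: a) ++ y :: b)).
  change (G (x :: a)) with (F (x :: a)). change (G (y :: b)) with (F (y :: b)).
  apply Fsub; auto.
Qed.

Lemma G_nonneg v : WW v -> 0 <= G v.
Proof. intros [H|H]. subst; simpl; lra. destruct v. simpl; lra. apply Fnonneg; auto. Qed.

Definition K0 := Rabs (F (false :: nil)) + Rabs (F (true :: nil)).

Lemma K0_nonneg : 0 <= K0.
Proof. unfold K0. pose proof (Rabs_pos (F (false :: nil))). pose proof (Rabs_pos (F (true :: nil))). lra. Qed.

Lemma G_bound v : WW v -> G v <= INR (length v) * K0.
Proof.
  induction v as [|b v IH]; intros H. simpl. lra.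
  change (b :: v) with ((b :: nil) ++ v) in H.
  pose proof (G_sub _ _ H) as Hs. simpl app in Hs.
  pose proof (IH (WW_suf _ _ H)).
  assert (G (b :: nil) <= K0).
  { unfold G, K0. pose proof (Rabs_pos (F (false :: nil))). pose proof (Rabs_pos (F (true :: nil))).
    pose proof (Rle_abs (F (false :: nil))). pose proof (Rle_abs (F (true :: nil))).
    destruct b; lra. }
  simpl length. rewrite S_INR. lra.
Qed.

Lemma WW_len n : exists w, WW w /\ length w = n.
Proof.
  destruct n. exists nil. split. left; auto. auto.
  destruct (Wlen (S n)) as [w [H1 H2]]. lia. exists w. split; auto. right; auto.
Qed.

Definition EM n (x : R) := exists w, WW w /\ length w = n /\ x = G w.

Lemma EM_bound n : bound (EM n).
Proof. exists (INR n * K0). intros x [w [H1 [H2 H3]]]. subst. apply G_bound; auto. Qed.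

Lemma EM_ne n : exists x, EM n x.
Proof. destruct (WW_len n) as [w [H1 H2]]. exists (G w). exists w. auto. Qed.

Definition M n := proj1_sig (completeness (EM n) (EM_bound n) (EM_ne n)).

Lemma M_lub n : is_lub (EM n) (M n).
Proof. unfold M. destruct completeness. simpl. auto. Qed.

Lemma M_ge w : WW w -> G w <= M (length w).
Proof. intros H. destruct (M_lub (length w)) as [H1 _]. apply H1. exists w. auto. Qed.

Lemma M_le n B : (forall w, WW w -> length w = n -> G w <= B) -> M n <= B.
Proof.
  intros H. destruct (M_lub n) as [_ H2]. apply H2. intros x [w [H3 [H4 H5]]]. subst. auto.
Qed.

Lemma M_nonneg n : 0 <= M n.
Proof. destruct (WW_len n) as [w [H1 H2]]. subst. pose proof (M_ge w H1). pose proof (G_nonneg w H1). lra. Qed.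

Lemma M_bound n : M n <= INR n * K0.
Proof. apply M_le. intros w H1 H2. subst. apply G_bound; auto. Qed.

Lemma M_sub m n : M (m + n) <= M m + M n.
Proof.
  apply M_le. intros w H1 H2.
  rewrite <- (firstn_skipn m w) in H1 |- *.
  pose proof (G_sub _ _ H1).
  pose proof (M_ge _ (WW_pre _ _ H1)). pose proof (M_ge _ (WW_suf _ _ H1)).
  rewrite length_firstn in H0. rewrite length_skipn in H3.
  replace (Nat.min m (length w)) with m in H0 by lia.
  replace (length w - m)%nat with n in H3 by lia. lra.
Qed.

Lemma M_mul s n r : M (s * n + r) <= INR s * M n + M r.
Proof.
  induction s. simpl. lra.
  replace (S s * n + r)%nat with (n + (s * n + r))%nat by lia.
  pose proof (M_sub n (s * n + r)). rewrite S_INR. lra.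
Qed.

(* l = inf M n / n *)
Definition EN (x : R) := exists n, (1 <= n)%nat /\ x = - (M n / INR n).

Lemma EN_bound : bound EN.
Proof.
  exists 0. intros x [n [H1 H2]]. subst.
  assert (0 < INR n) by (apply (lt_INR 0); lia).
  assert (0 <= M n / INR n) by (apply Rdiv_le_0_compat; [apply M_nonneg|lra]). lra.
Qed.

Lemma EN_ne : exists x, EN x.
Proof. exists (- (M 1 / INR 1)). exists 1%nat. auto. Qed.

Definition lim := - proj1_sig (completeness EN EN_bound EN_ne).

Lemma lim_le n : (1 <= n)%nat -> lim <= M n / INR n.
Proof.
  intros Hn. unfold lim. destruct completeness as [x [H1 H2]]. simpl.
  assert (- (M n / INR n) <= x) by (apply H1; exists n; auto). lra.
Qed.

Lemma lim_approx eps : 0 < eps -> exists n, (1 <= n)%nat /\ M n / INR n < lim + eps.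
Proof.
  intros He. unfold lim. destruct completeness as [x [H1 H2]]. simpl.
  apply NNPP. intro Hno.
  assert (x <= x - eps).
  { apply H2. intros y [n [Hn Hy]]. subst.
    destruct (Rlt_le_dec (M n / INR n) (- x + eps)) as [H|H].
    - exfalso. apply Hno. exists n. split; auto.
    - lra. }
  lra.
Qed.

Lemma lim_nonneg : 0 <= lim.
Proof.
  unfold lim. destruct completeness as [x [H1 H2]]. simpl.
  assert (x <= 0).
  { apply H2. intros y [n [Hn Hy]]. subst.
    assert (0 < INR n) by (apply (lt_INR 0); lia).
    assert (0 <= M n / INR n) by (apply Rdiv_le_0_compat; [apply M_nonneg|lra]). lra. }
  lra.
Qed.

Lemma INR_up_nat (x : R) : exists N : nat, x <= INR N.
Proof.
  destruct (archimed x) as [H1 H2].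
  destruct (Z_lt_le_dec (up x) 0).
  - exists 0%nat. simpl. assert (IZR (up x) < 0) by (apply IZR_lt; auto). lra.
  - exists (Z.to_nat (up x)). rewrite INR_IZR_INZ, Z2Nat.id; auto. lra.
Qed.

Lemma fekete eps : 0 < eps -> exists N0, forall N, (N0 <= N)%nat -> M N <= (lim + eps) * INR N.
Proof.
  intros He. destruct (lim_approx (eps / 2)) as [n0 [Hn0 Hl]]. lra.
  assert (Hn0R : 1 <= INR n0) by (apply (le_INR 1); auto).
  destruct (INR_up_nat (2 * INR n0 * K0 / eps)) as [N1 HN1].
  exists N1. intros N HN.
  pose proof (Nat.div_mod N n0 ltac:(lia)) as Hdm.
  pose proof (Nat.mod_upper_bound N n0 ltac:(lia)) as Hr.
  set (s := (N / n0)%nat) in *. set (r := (N mod n0)%nat) in *.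
  assert (HN' : N = (s * n0 + r)%nat) by lia.
  pose proof (M_mul s n0 r) as Hm. rewrite <- HN' in Hm.
  pose proof (M_bound r) as Hmr.
  assert (HrR : INR r <= INR n0) by (apply le_INR; lia).
  assert (HsN : INR s * INR n0 <= INR N) by (rewrite <- mult_INR; apply le_INR; lia).
  assert (HMn0 : M n0 <= (lim + eps / 2) * INR n0).
  { apply (Rmult_lt_compat_r (INR n0)) in Hl; [|lra].
    unfold Rdiv in Hl. rewrite Rmult_assoc, Rinv_l in Hl by lra. lra. }
  pose proof lim_nonneg. pose proof K0_nonneg.
  assert (HsR : 0 <= INR s) by apply pos_INR.
  assert (INR s * M n0 <= INR s * ((lim + eps / 2) * INR n0)) by (apply Rmult_le_compat_l; auto).
  assert (INR s * ((lim + eps / 2) * INR n0) <= (lim + eps/2) * INR N).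
  { replace (INR s * ((lim + eps / 2) * INR n0)) with ((lim + eps/2) * (INR s * INR n0)) by ring.
    apply Rmult_le_compat_l; lra. }
  assert (INR r * K0 <= INR n0 * K0) by (apply Rmult_le_compat_r; auto).
  assert (HNb : 2 * INR n0 * K0 / eps <= INR N).
  { assert (INR N1 <= INR N) by (apply le_INR; auto). lra. }
  assert (INR n0 * K0 <= eps / 2 * INR N).
  { apply (Rmult_le_compat_r (eps / 2)) in HNb; [|lra].
    replace (2 * INR n0 * K0 / eps * (eps / 2)) with (INR n0 * K0) in HNb by (field; lra). lra. }
  lra.
Qed.

Lemma unif_bound delta : 0 < delta -> exists D0, 0 <= D0 /\ forall m, M m <= (lim + delta) * INR m + D0.
Proof.
  intros Hd. destruct (fekete delta Hd) as [N0 HN0].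
  exists (INR N0 * K0). pose proof K0_nonneg. pose proof lim_nonneg.
  split. apply Rmult_le_pos; auto. apply pos_INR.
  intros m. destruct (le_lt_dec N0 m).
  - pose proof (HN0 m l). assert (0 <= INR N0 * K0) by (apply Rmult_le_pos; auto; apply pos_INR). lra.
  - pose proof (M_bound m). assert (INR m <= INR N0) by (apply le_INR; lia).
    assert (INR m * K0 <= INR N0 * K0) by (apply Rmult_le_compat_r; auto).
    assert (0 <= (lim + delta) * INR m) by (apply Rmult_le_pos; [lra|apply pos_INR]). lra.
Qed.

Lemma lower eps : 0 < eps -> exists n1, forall u, W u -> (n1 <= length u)%nat ->
  (lim - eps) * INR (length u) <= F u.
Proof.
  intros He.
  assert (HCrR : 1 <= INR Cr) by (apply (le_INR 1); auto).
  set (delta := eps / (4 * INR Cr)).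
  set (eta := eps / (4 * (INR Cr + 1))).
  assert (Hdelta : 0 < delta) by (unfold delta; apply Rdiv_lt_0_compat; lra).
  assert (Heta : 0 < eta) by (unfold eta; apply Rdiv_lt_0_compat; lra).
  assert (HdC : delta * INR Cr = eps / 4) by (unfold delta; field; lra).
  assert (HeC : eta * (INR Cr + 1) = eps / 4) by (unfold eta; field; lra).
  assert (Heta8 : eta <= eps / 8).
  { assert (eta * 2 <= eta * (INR Cr + 1)) by (apply Rmult_le_compat_l; lra). lra. }
  destruct (unif_bound delta Hdelta) as [D0 [HD0 HD]].
  destruct (INR_up_nat (3 * D0 / eps)) as [n1 Hn1].
  exists (S n1). intros u Hu Hlen.
  apply NNPP. intros Hneg. apply Rnot_le_lt in Hneg.
  assert (Hu0 : u <> nil) by (intro E; subst u; simpl in Hlen; lia).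
  assert (Gu : G u = F u) by (destruct u; [congruence|reflexivity]).
  set (n := length u) in *.
  assert (HnR : INR (S n1) <= INR n) by (apply le_INR; auto).
  rewrite S_INR in HnR.
  assert (Hn1' : 3 * D0 <= eps * INR n).
  { apply (Rmult_le_compat_r eps) in Hn1; [|lra].
    replace (3 * D0 / eps * eps) with (3 * D0) in Hn1 by (field; lra). nra. }
  set (lam := lim - eta).
  set (L := (Cr * n)%nat).
  set (D' := D0 + (delta + eta) * INR L).
  assert (Claim : forall N v, length v = N -> WW v -> G v <= lam * INR N + D').
  { intro N. induction N as [N IH] using lt_wf_ind. intros v Hv HWv.
    destruct (le_lt_dec L N) as [HLN|HLN].
    - assert (HWv' : W v).
      { destruct HWv as [E|E]; auto. subst v. simpl in Hv. subst N.
        unfold L in HLN. assert (1 <= n)%nat by lia. nia. }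
      destruct (Hrec u v Hu HWv' ltac:(lia)) as [g [v' [Ev Hg]]].
      fold n in Hg. fold L in Hg.
      rewrite Ev in HWv |- *.
      pose proof (G_sub _ _ HWv) as S1.
      pose proof (WW_suf _ _ HWv) as HW2.
      pose proof (G_sub _ _ HW2) as S2.
      pose proof (WW_suf _ _ HW2) as HW3.
      assert (Hlv : length v = (length g + n + length v')%nat) by (rewrite Ev, !length_app; fold n; lia).
      assert (Hv' : (length v' < N)%nat) by lia.
      pose proof (IH _ Hv' v' eq_refl HW3) as I3.
      pose proof (M_ge g (WW_pre _ _ HWv)) as Mg. pose proof (HD (length g)) as Dg.
      assert (HgR : INR (length g) <= INR Cr * INR n) by (rewrite <- mult_INR; apply le_INR; auto).
      assert (HlvR : INR N = INR (length g) + INR n + INR (length v')) by (rewrite <- Hv, Hlv, !plus_INR; ring).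
      assert (HD'0 : D0 <= D') by (unfold D'; assert (0 <= INR L) by apply pos_INR;
        assert (0 <= (delta + eta) * INR L) by (apply Rmult_le_pos; lra); lra).
      assert (Hkey : (delta + eta) * INR (length g) <= eps / 2 * INR n).
      { assert ((delta + eta) * INR (length g) <= (delta + eta) * (INR Cr * INR n))
          by (apply Rmult_le_compat_l; lra).
        assert ((delta + eta) * (INR Cr * INR n) = (delta * INR Cr + eta * INR Cr) * INR n) by ring.
        assert (eta * INR Cr <= eps / 4) by lra.
        assert (0 <= INR n) by apply pos_INR.
        assert ((delta * INR Cr + eta * INR Cr) * INR n <= (eps/4 + eps/4) * INR n)
          by (apply Rmult_le_compat_r; lra).
        lra. }
      assert (eta * INR n <= eps / 8 * INR n) by (apply Rmult_le_compat_r; [apply pos_INR|lra]).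
      unfold lam in *. rewrite HlvR. lra.
    - pose proof (M_ge v HWv) as Mv. pose proof (HD (length v)) as Dv. rewrite Hv in Mv, Dv.
      assert (INR N <= INR L) by (apply le_INR; lia).
      assert ((delta + eta) * INR N <= (delta + eta) * INR L) by (apply Rmult_le_compat_l; lra).
      unfold lam, D'. lra. }
  destruct (INR_up_nat (D' / eta + 1)) as [N HN].
  assert (HN1 : (1 <= N)%nat).
  { apply INR_le. simpl. assert (0 <= D') by (unfold D'; assert (0 <= INR L) by apply pos_INR;
        assert (0 <= (delta + eta) * INR L) by (apply Rmult_le_pos; lra); lra).
    assert (0 <= D' / eta) by (apply Rdiv_le_0_compat; lra). lra. }
  assert (HMN : M N <= lam * INR N + D').
  { apply M_le. intros w Hw Hlw. apply Claim; auto. }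
  pose proof (lim_le N HN1) as Hl.
  assert (HNR : 1 <= INR N) by (apply (le_INR 1); auto).
  apply (Rmult_le_compat_r (INR N)) in Hl; [|lra].
  unfold Rdiv in Hl. rewrite Rmult_assoc, Rinv_l in Hl by lra.
  assert (eta * INR N <= D') by (unfold lam in HMN; lra).
  assert (D' / eta * eta = D') by (field; lra).
  assert ((D' / eta + 1) * eta <= INR N * eta) by (apply Rmult_le_compat_r; lra).
  lra.
Qed.

Lemma sub_limit : exists l : R, forall eps : R, eps > 0 ->
    exists n_eps : nat, forall w, W w -> (length w >= n_eps)%nat ->
      Rabs (F w / INR (length w) - l) <= eps.
Proof.
  exists lim. intros eps He.
  destruct (fekete eps He) as [N0 HN0].
  destruct (lower eps He) as [n1 Hn1].
  exists (Nat.max 1 (Nat.max N0 n1)). intros w Hw Hl.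
  assert (HwR : 1 <= INR (length w)) by (apply (le_INR 1); lia).
  pose proof (HN0 (length w) ltac:(lia)) as U.
  pose proof (M_ge w (or_intror Hw)) as Mw.
  pose proof (Hn1 w Hw ltac:(lia)) as Lw.
  assert (Gw : G w = F w) by (destruct w; [simpl in HwR; lra|auto]).
  rewrite Gw in Mw.
  assert (E : F w / INR (length w) - lim = (F w - lim * INR (length w)) / INR (length w)) by (field; lra).
  rewrite E. unfold Rdiv. rewrite Rabs_mult, Rabs_inv, (Rabs_right (INR (length w))) by lra.
  apply (Rmult_le_reg_r (INR (length w))). lra.
  rewrite Rmult_assoc, Rinv_l, Rmult_1_r by lra.
  apply Rabs_le. lra.
Qed.
End Sub.


Lemma inW_fac alpha x y z : in_W alpha (x ++ y ++ z) -> y <> nil -> in_W alpha y.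
Proof.
  intros [_ [th [Hth [k Hk]]]] Hy. split; auto. exists th. split; auto.
  exists (k + Z.of_nat (length x))%Z. intros i Hi.
  specialize (Hk (length x + i)%nat).
  rewrite app_nth2 in Hk by lia. rewrite app_nth1 in Hk by lia.
  replace (length x + i - length x)%nat with i in Hk by lia.
  rewrite Hk. f_equal. lia.
  rewrite !length_app. lia.
Qed.

Lemma nth_map_seq {A : Type} (f : nat -> A) n i d : (i < n)%nat -> nth i (map f (seq 0 n)) d = f i.
Proof.
  intros Hi. rewrite (nth_indep _ d (f 0%nat)) by (rewrite length_map, length_seq; auto).
  rewrite map_nth, seq_nth by auto. reflexivity.
Qed.

Lemma inW_len alpha n : (1 <= n)%nat -> exists w, in_W alpha w /\ length w = n.
Proof.
  intros Hn. exists (map (fun i => sturm alpha 0 (Z.of_nat i)) (seq 0 n)).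
  split.
  - split. destruct n. lia. simpl. discriminate.
    exists 0. split. lra. exists 0%Z. intros i Hi.
    rewrite length_map, length_seq in Hi.
    rewrite nth_map_seq by auto. reflexivity.
  - rewrite length_map, length_seq. auto.
Qed.

Theorem lemma4 (alpha : R)
  (Halpha : 0 < alpha < 1) (Hirr : irrational alpha)
  (Hbdd : exists C : R, forall n : nat, Rabs (IZR (cf_digit alpha n)) <= C)
  (F : list bool -> R)
  (Fnonneg : forall w, in_W alpha w -> 0 <= F w)
  (Fsub : forall a b, in_W alpha a -> in_W alpha b -> in_W alpha (a ++ b) ->
          F (a ++ b) <= F a + F b) :
  exists l : R, forall eps : R, eps > 0 ->
    exists n_eps : nat, forall w, in_W alpha w -> (length w >= n_eps)%nat ->
      Rabs (F w / INR (length w) - l) <= eps.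
Proof.
  destruct Hbdd as [C HC].
  assert (HA : forall n, IZR (cf_digit alpha n) <= C).
  { intro n. pose proof (Rle_abs (IZR (cf_digit alpha n))). pose proof (HC n). lra. }
  pose proof (c0_facts alpha Halpha Hirr C HA) as Hc.
  pose proof (badly_approx alpha Halpha Hirr C HA) as Hba.
  destruct (recurrence alpha Halpha (c0 C) Hc Hba) as [Cr [HCr Hrec]].
  apply (sub_limit (in_W alpha) (inW_fac alpha) (inW_len alpha) F Fnonneg Fsub Cr HCr Hrec).
Qed.
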